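(* Let $L$ be an $n\times n$ nonsingular M-matrix with integer entries. Every equivalence class of $\mathbb{Z}^n$ under $\sim$ contains exactly one $z$-superstable configuration.
   Context: A Z-matrix is a square real matrix whose off-diagonal entries are all $\le 0$. A nonsingular M-matrix is a Z-matrix $L$ that is invertible with $L^{-1}$ having all entries nonnegative. Vector inequalities are entrywise. For $f,g\in\mathbb{Z}^n$, $f\sim g$ means $g-f=Lz$ for some $z\in\mathbb{Z}^n$. A vector $f\in\mathbb{Z}^n$ with $f\ge 0$ is $z$-superstable with respect to $L$ if for every $z\in\mathbb{Z}^n$ with $z\ge0$ and $z\ne0$ there exists $i$ with $f_i-(Lz)_i<0$. *)

(* Defs.v *)
From HB Require Import structures.
From mathcomp Require Import all_boot all_order all_algebra.
Set Implicit Arguments. Unset Strict Implicit. Unset Printing Implicit Defensive.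
Import Order.TTheory GRing.Theory Num.Theory.
Local Open Scope ring_scope.

Definition Zmatrix (n : nat) (L : 'M[int]_n) : Prop :=
  forall i j : 'I_n, i != j -> L i j <= 0.

Definition ratmx (n : nat) (L : 'M[int]_n) : 'M[rat]_n := map_mx (fun x => x%:~R) L.

(* Nonsingular M-matrix: Z-matrix, invertible (over Q, equivalently over R),
   with entrywise nonnegative inverse. *)
Definition nonsingM (n : nat) (L : 'M[int]_n) : Prop :=
  Zmatrix L /\ ratmx L \in unitmx /\
  forall i j : 'I_n, 0 <= invmx (ratmx L) i j.

Definition Lequiv (n : nat) (L : 'M[int]_n) (f g : 'cV[int]_n) : Prop :=
  exists z : 'cV[int]_n, g - f = L *m z.

Definition zsuperstable (n : nat) (L : 'M[int]_n) (f : 'cV[int]_n) : Prop :=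
  (forall i : 'I_n, 0 <= f i 0) /\
  forall z : 'cV[int]_n, (forall i : 'I_n, 0 <= z i 0) -> z != 0 ->
    exists i : 'I_n, f i 0 - (L *m z) i 0 < 0.

(* Main.v *)
Require Import Defs.
From HB Require Import structures.
From mathcomp Require Import all_boot all_order all_algebra.
From mathcomp Require Import zify lra.
From Stdlib Require Import Classical.
Import Order.TTheory GRing.Theory Num.Theory.
Local Open Scope ring_scope.

Lemma Lnonpos (n : nat) (L : 'M[int]_n) (w : 'cV[int]_n) (i : 'I_n) :
  Zmatrix L -> (forall j, 0 <= w j 0) -> w i 0 = 0 -> (L *m w) i 0 <= 0.
Proof.
move=> HZ Hw Hi; rewrite mxE; apply: sumr_le0 => j _.
case: (eqVneq i j) => [<-|ne]; first by rewrite Hi mulr0.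
by apply: mulr_le0_ge0; [exact: HZ | exact: Hw].
Qed.

Lemma entryB (n : nat) (A B : 'cV[int]_n) i : (A - B) i 0 = A i 0 - B i 0.
Proof. by rewrite !mxE. Qed.

Lemma uniq_aux (n : nat) (L : 'M[int]_n) (g h z : 'cV[int]_n) :
  Zmatrix L -> zsuperstable L g -> zsuperstable L h -> h - g = L *m z -> z = 0.
Proof.
move=> HZ [Hg0 Hg] [Hh0 Hh] E.
pose zp : 'cV[int]_n := \col_i Num.max (z i 0) 0.
pose zm : 'cV[int]_n := \col_i Num.max (- z i 0) 0.
have Ez : z = zp - zm.
  by apply/matrixP => i j; rewrite (ord1 j) !mxE; lia.
have Ec : forall i, h i 0 - (L *m zp) i 0 = g i 0 - (L *m zm) i 0.
  move=> i; rewrite -!entryB; congr (_ i 0).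
  have -> : h = (h - g) + g by rewrite subrK.
  rewrite E Ez mulmxBr.
  by rewrite addrAC [X in X + g]addrAC subrr add0r addrC.
have zp0 : forall j, 0 <= zp j 0 by move=> j; rewrite mxE; lia.
have zm0 : forall j, 0 <= zm j 0 by move=> j; rewrite mxE; lia.
have Hc : forall i, 0 <= h i 0 - (L *m zp) i 0.
  move=> i; case: (lerP 0 (z i 0)) => hz.
  - rewrite Ec; have : (L *m zm) i 0 <= 0.
      apply: Lnonpos => //; rewrite mxE; lia.
    have := Hg0 i; lia.
  - have : (L *m zp) i 0 <= 0.
      apply: Lnonpos => //; rewrite mxE; lia.
    have := Hh0 i; lia.
have Ep : zp = 0.
  apply/eqP; apply/negP => /negP nz.
  have [i Hi] := Hh zp zp0 nz; have := Hc i; lia.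
have Em : zm = 0.
  apply/eqP; apply/negP => /negP nz.
  have [i Hi] := Hg zm zm0 nz; have := Hc i; rewrite Ec; lia.
by rewrite Ez Ep Em subr0.
Qed.

Lemma pos_aux (d k x : int) : d != 0 -> `|x| <= k -> 0 <= x + k * d * d.
Proof. move=> h1 h2.
have hdd : 1 <= d * d.
  have : (0 < d) || (d < 0) by lia.
  by case/orP=> h; nia.
nia. Qed.

Section Exist.
Variables (n : nat) (L : 'M[int]_n).
Hypothesis HL : nonsingM L.

Definition rv (g : 'cV[int]_n) : 'cV[rat]_n := map_mx intr g.
Definition Phi (g : 'cV[int]_n) : rat := \sum_i (invmx (ratmx L) *m rv g) i 0.

Lemma Phi_ge0 (g : 'cV[int]_n) : (forall i, 0 <= g i 0) -> 0 <= Phi g.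
Proof.
case: HL => _ [_ Hp] Hg; apply: sumr_ge0 => i _; rewrite mxE.
apply: sumr_ge0 => j _; rewrite mxE; apply: mulr_ge0 => //.
by rewrite ler0z.
Qed.

Lemma Phi_fire (g z : 'cV[int]_n) : Phi (g - L *m z) = Phi g - \sum_i (z i 0)%:~R.
Proof.
case: HL => _ [Hu _].
rewrite /Phi /rv map_mxB map_mxM.
have -> : map_mx intr L = ratmx L by [].
rewrite mulmxBr mulmxA mulVmx // mul1mx -sumrB.
by apply: eq_bigr => i _; rewrite !mxE.
Qed.

Lemma sum_ge1 (z : 'cV[int]_n) : (forall i, 0 <= z i 0) -> z != 0 ->
  1 <= \sum_i (z i 0)%:~R :> rat.
Proof.
move=> H0 nz.
have [i0 Hi0] : exists i, z i 0 != 0.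
  apply: NNPP => Hn; move/negP: nz; apply; apply/eqP/matrixP => i j.
  rewrite (ord1 j) mxE; apply/eqP; apply: NNPP => Hne; apply: Hn; exists i; exact/negP.
rewrite (bigD1 i0) //=; apply: ler_wpDr.
  by apply: sumr_ge0 => i _; rewrite ler0z.
rewrite ler1z; have := H0 i0; move: Hi0; lia.
Qed.

Lemma exist_aux (f : 'cV[int]_n) (N : nat) (g : 'cV[int]_n) : Lequiv L f g -> (forall i, 0 <= g i 0) ->
  Phi g < N%:R -> exists g', Lequiv L f g' /\ zsuperstable L g'.
Proof.
elim: N g => [|N IH] g Heq Hg0 HN.
  by have := Phi_ge0 g Hg0; rewrite leNgt HN.
case: (classic (zsuperstable L g)) => Hs; first by exists g.
have : ~ (forall z : 'cV[int]_n, (forall i : 'I_n, 0 <= z i 0) -> z != 0 ->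
    exists i : 'I_n, g i 0 - (L *m z) i 0 < 0) by move=> H; apply: Hs.
move/not_all_ex_not => [z Hz].
have [z0 [nz Hneg]] : (forall i : 'I_n, 0 <= z i 0) /\ z != 0 /\
    ~ exists i : 'I_n, g i 0 - (L *m z) i 0 < 0 by tauto.
have Hge : forall i, 0 <= (g - L *m z) i 0.
  move=> i; rewrite entryB leNgt; apply/negP => Hl; apply: Hneg; exists i; exact: Hl.
apply: (IH (g - L *m z)) => //.
- case: Heq => w Hw; exists (w - z).
  by rewrite mulmxBr -Hw addrAC.
- rewrite Phi_fire; have := sum_ge1 z z0 nz.
  move: HN; rewrite -natr1 => HN H1.
  lra.
Qed.

End Exist.

Theorem mainTheorem6 (n : nat) (L : 'M[int]_n) (HL : nonsingM L) :
  forall f : 'cV[int]_n,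
    exists! g : 'cV[int]_n, Lequiv L f g /\ zsuperstable L g.
Proof.
move=> f.
have [g [Hg Hs]] : exists g, Lequiv L f g /\ zsuperstable L g.
  case: (HL) => _ [Hu _].
  have hd : \det L != 0.
    move: Hu; rewrite unitmxE unitfE /ratmx.
    have -> : map_mx (fun x : int => x%:~R : rat) L = map_mx intr L by [].
    by rewrite det_map_mx intr_eq0.
  pose k : int := \sum_i `|f i 0|.
  pose z0 : 'cV[int]_n := (k * \det L) *: (\adj L *m const_mx 1).
  have HLz : forall i, (L *m z0) i 0 = k * \det L * \det L.
    move=> i; rewrite /z0 -scalemxAr mulmxA mul_mx_adj mul_scalar_mx.
    by rewrite !mxE mulr1.
  have Hk : forall i, `|f i 0| <= k.
    move=> i; rewrite /k (bigD1 i) //=; apply: ler_wpDr => //.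
    by apply: sumr_ge0.
  have Heq : Lequiv L f (f + L *m z0) by exists z0; rewrite addrC addKr.
  have H0 : forall i, 0 <= (f + L *m z0) i 0.
    by move=> i; rewrite mxE HLz; apply: pos_aux.
  have Pge := @Phi_ge0 _ _ HL _ H0.
  exact: (@exist_aux _ _ HL _ _ _ Heq H0 (archi_boundP Pge)).
exists g; split => // g' [Hg' Hs'].
case: Hg => w Hw; case: Hg' => w' Hw'.
have E : g' - g = L *m (w' - w) by rewrite mulmxBr -Hw -Hw' opprB addrA subrK.
case: HL => HZ _.
have := @uniq_aux _ _ _ _ _ HZ Hs Hs' E => /eqP; rewrite subr_eq0 => /eqP ew.
have : g' - g = 0 by rewrite E ew subrr mulmx0.
by move/eqP; rewrite subr_eq0 => /eqP.
Qed.
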